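(* Let $V$ be a finite dimensional vector space over a field $\mathbb{K}$ of characteristic zero, and let $u,v_0,\ldots,v_n\in\widehat L(V)$ satisfy $|\exp(u)|\in\big|\sum_{j=0}^n\mathbb{K}[[v_j]]\big|$. Then $|u^m|\in\sum_{j=0}^n\mathbb{K}|v_j^m|$ for all $m\ge0$.
   Context: $\widehat T(V)=\prod_{m\ge0}V^{\otimes m}$ is the completed tensor algebra and $\widehat L(V)$ the completed free Lie algebra on $V$ (primitive elements of $\widehat T(V)$; they have no constant term). For $v\in\widehat L(V)$, $\mathbb{K}[[v]]\subset\widehat T(V)$ is the set of convergent series $\sum_{k\ge0}c_kv^k$, $c_k\in\mathbb{K}$. $|\widehat T(V)|$ is the quotient of $\widehat T(V)$ by the closure of the span of commutators, with projection $x\mapsto|x|$, and $|S|$ denotes the image of a subset $S$. *)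

(* Defs.v *)
From HB Require Import structures.
From mathcomp Require Import all_boot all_order all_algebra.
Set Implicit Arguments. Unset Strict Implicit. Unset Printing Implicit Defensive.
Import Order.TTheory GRing.Theory Num.Theory.
Local Open Scope ring_scope.

(* V = K^d with basis x_0..x_{d-1}.  The completed tensor algebra
   \widehat T(V) = prod_m V^{(x)m} is identified with noncommutative formal
   power series: a series assigns a coefficient to each word in the letters 'I_d. *)
Definition series (K : fieldType) (d : nat) := seq 'I_d -> K.

Section Series.
Variables (K : fieldType) (d : nat).
Local Notation S := (series K d).

Definition sone : S := fun w => if w == [::] then 1 else 0.

Definition smul (f g : S) : S :=
  fun w => \sum_(i < (size w).+1) f (take i w) * g (drop i w).

Fixpoint spow (f : S) (k : nat) : S :=
  if k is k'.+1 then smul f (spow f k') else sone.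

(* exp(f) = sum_k f^k / k!, for f without constant term (coefficient of a word
   w only receives contributions from k <= size w) *)
Definition sexp (f : S) : S :=
  fun w => \sum_(k < (size w).+1) (k`!%:R)^-1 * spow f k w.

(* the convergent series sum_k c_k f^k, for f without constant term *)
Definition spowser (c : nat -> K) (f : S) : S :=
  fun w => \sum_(k < (size w).+1) c k * spow f k w.

Fixpoint merge (m : seq bool) (u v : seq 'I_d) : seq 'I_d :=
  match m with
  | [::] => [::]
  | b :: m' =>
      if b then (if u is a :: u' then a :: merge m' u' v else [::])
      else (if v is a :: v' then a :: merge m' u v' else [::])
  end.

(* coefficient of u (x) v in the (shuffle) coproduct Delta(f), where
   Delta(x_i) = x_i (x) 1 + 1 (x) x_i *)
Definition coprod (f : S) (u v : seq 'I_d) : K :=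
  \sum_(m : (size u + size v).-tuple bool | count id m == size u) f (merge m u v).

(* primitive elements: Delta f = f (x) 1 + 1 (x) f;  these form \widehat L(V) *)
Definition is_lie (f : S) : Prop :=
  forall u v : seq 'I_d,
    coprod f u v = (if v == [::] then f u else 0) + (if u == [::] then f v else 0).

(* f lies in the closure (for the degree-filtration topology) of the linear span
   of commutators [a,b] = ab - ba, a b in \widehat T(V):
   for every N, f agrees with a finite sum of commutators on all words of length < N. *)
Definition in_comm_closure (f : S) : Prop :=
  forall N : nat, exists (n : nat) (a b : 'I_n -> S),
    forall w : seq 'I_d, (size w < N)%N ->
      f w = \sum_(i < n) (smul (a i) (b i) w - smul (b i) (a i) w).

End Series.

(* Main.v *)
Require Import Defs.
From HB Require Import structures.
From mathcomp Require Import all_boot all_order all_algebra.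
From mathcomp Require Import ring zify.
Import GRing.Theory.
Local Open Scope ring_scope.

Section Work.
Variables (K : fieldType) (d : nat).
Local Notation S := (series K d).

Lemma smulE (f g : S) w : smul f g w = \sum_(0 <= i < (size w).+1) f (take i w) * g (drop i w).
Proof. by rewrite /smul big_mkord. Qed.

Fixpoint bseqs (k : nat) : seq (seq bool) :=
  if k is k'.+1 then map (cons true) (bseqs k') ++ map (cons false) (bseqs k') else [:: [::]].

Lemma mem_cons_map (b c : bool) s (X : seq (seq bool)) :
  (b :: s \in map (cons c) X) = (b == c) && (s \in X).
Proof.
by apply/mapP/andP => [[t Ht [-> ->]]|[/eqP -> Hs]]; [split|exists s].
Qed.

Lemma mem_bseqs k s : (s \in bseqs k) = (size s == k).
Proof.
elim: k s => [|k IH] [|b s] //=; try (by rewrite mem_cat; apply/orP => -[] /mapP []).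
rewrite mem_cat !mem_cons_map !IH eqSS -andb_orl; by move: b; rewrite /= => -[].
Qed.

Lemma uniq_bseqs k : uniq (bseqs k).
Proof.
elim: k => //= k IH; rewrite cat_uniq !map_inj_uniq // ?IH /=; try by move=> ? ? [].
rewrite andbT; apply/hasPn => s /mapP [t _ ->]; by rewrite mem_cons_map.
Qed.

Lemma coprodE (f : S) a b : coprod f a b =
  \sum_(s <- bseqs (size a + size b) | count id s == size a) f (Defs.merge s a b).
Proof.
rewrite /coprod.
set k := (size a + size b)%N.
have P : perm_eq (map val (enum {: k.-tuple bool})) (bseqs k).
  apply: uniq_perm; first by rewrite map_inj_uniq ?enum_uniq //; exact: val_inj.
    exact: uniq_bseqs.
  move=> s; rewrite mem_bseqs; apply/mapP/idP => [[t _ ->]|Hs].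
    by rewrite size_tuple.
  by exists (Tuple Hs); rewrite ?mem_enum.
by rewrite -(perm_big _ P) big_map big_enum_cond /=.
Qed.


Local Notation mrg := Defs.merge.
Definition dl (x : 'I_d) (f : S) : S := fun w => f (x :: w).

Lemma coprod_ext (f g : S) a b : f =1 g -> coprod f a b = coprod g a b.
Proof. by move=> E; apply: eq_bigr => m _; rewrite E. Qed.

Lemma coprod_nil_l (f : S) b : coprod f [::] b = f b.
Proof.
elim: b f => [|y b IH] f; rewrite coprodE /=.
  by rewrite big_cons big_nil /= addr0.
rewrite big_cat !big_map /= big1 ?add0r; last by [].
transitivity (dl y f b) => //; rewrite -IH coprodE /=.
by apply: eq_bigr.
Qed.

Lemma coprod_nil_r (f : S) a : coprod f a [::] = f a.
Proof.
elim: a f => [|x a IH] f; rewrite coprodE /=.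
  by rewrite big_cons big_nil /= addr0.
rewrite addn0 /= big_cat !big_map /=.
rewrite [X in _ + X]big_seq_cond [X in _ + X]big1 ?addr0; last first.
  move=> s /andP [Hm /eqP Hc]; rewrite mem_bseqs in Hm.
  rewrite add0n in Hc; by move: (count_size id s); rewrite (eqP Hm) Hc ltnn.
transitivity (dl x f a) => //; rewrite -IH coprodE /= addn0.
by apply: eq_bigr.
Qed.

Lemma coprod_cons (f : S) x a y b : coprod f (x :: a) (y :: b) =
  coprod (dl x f) a (y :: b) + coprod (dl y f) (x :: a) b.
Proof.
rewrite [LHS]coprodE /= big_cat !big_map /=.
congr (_ + _); rewrite coprodE.
  by apply: eq_big => s //=; rewrite add1n eqSS.
rewrite [size (x :: a)]/= addSnnS; apply: eq_big => s //=.
Qed.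


Lemma size_merge (m : seq bool) (a b : seq 'I_d) :
  count id m = size a -> size m = (size a + size b)%N -> size (mrg m a b) = size m.
Proof.
elim: m a b => [|c m IH] a b //= Hc Hs.
case: c Hc Hs => /= Hc Hs.
  case: a Hc Hs => [|x a] //= Hc Hs; rewrite IH //; [by case: Hc | by move: Hs; rewrite addSn => -[]].
case: b Hc Hs => [|y b] /= Hc Hs.
  rewrite add0n in Hc; rewrite addn0 in Hs.
  by move: (count_size id m); rewrite Hc -Hs ltnn.
by rewrite IH //; move: Hs; rewrite addnS => -[].
Qed.

Lemma coprod_ext_size (f g : S) a b :
  (forall z, size z = (size a + size b)%N -> f z = g z) -> coprod f a b = coprod g a b.
Proof.
move=> E; apply: eq_bigr => m /eqP Hc; apply: E.
by rewrite size_merge ?size_tuple.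
Qed.

Lemma coprodD (f g : S) a b : coprod (fun w => f w + g w) a b = coprod f a b + coprod g a b.
Proof. by rewrite /coprod big_split. Qed.

Lemma coprodB (f g : S) a b : coprod (fun w => f w - g w) a b = coprod f a b - coprod g a b.
Proof. by rewrite /coprod sumrB. Qed.

Lemma coprodZ c (f : S) a b : coprod (fun w => c * f w) a b = c * coprod f a b.
Proof. by rewrite /coprod mulr_sumr. Qed.

Lemma coprod_sum (I : Type) (r : seq I) (P : pred I) (F : I -> S) a b :
  coprod (fun w => \sum_(i <- r | P i) F i w) a b = \sum_(i <- r | P i) coprod (F i) a b.
Proof. by rewrite /coprod exchange_big. Qed.

Lemma coprod0 a b : coprod (fun _ : seq 'I_d => (0 : K)) a b = 0.
Proof. by rewrite /coprod big1. Qed.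

Lemma dl_smul x (f g : S) w : smul f g (x :: w) = smul (dl x f) g w + f [::] * dl x g w.
Proof.
by rewrite !smulE big_nat_recl //= addrC.
Qed.


Definition M2 (F G : seq 'I_d -> seq 'I_d -> K) a b :=
  \sum_(0 <= i < (size a).+1) \sum_(0 <= j < (size b).+1)
     F (take i a) (take j b) * G (drop i a) (drop j b).

Lemma coprod_smul_nil_l (f g : S) b :
  coprod (smul f g) [::] b = M2 (coprod f) (coprod g) [::] b.
Proof.
rewrite /M2 coprod_nil_l big_nat1 smulE; apply: eq_bigr => j _.
by rewrite !coprod_nil_l.
Qed.

Lemma coprod_smul_nil_r (f g : S) a :
  coprod (smul f g) a [::] = M2 (coprod f) (coprod g) a [::].
Proof.
rewrite /M2 coprod_nil_r smulE; apply: eq_bigr => i _.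
by rewrite big_nat1 !coprod_nil_r.
Qed.

Lemma coprod_smul (f g : S) a b :
  coprod (smul f g) a b = M2 (coprod f) (coprod g) a b.
Proof.
move: {2}(size a + size b)%N (leqnn (size a + size b)) => n.
elim: n f g a b => [|n IH] f g [|x a] [|y b] Hn;
  try exact: coprod_smul_nil_l; try exact: coprod_smul_nil_r.
  by move: Hn; rewrite /= addSn.
rewrite coprod_cons.
have E1 : coprod (dl x (smul f g)) a (y :: b) =
  coprod (fun w => smul (dl x f) g w + f [::] * dl x g w) a (y :: b).
  exact: coprod_ext (dl_smul x f g).
have E2 : coprod (dl y (smul f g)) (x :: a) b =
  coprod (fun w => smul (dl y f) g w + f [::] * dl y g w) (x :: a) b.
  exact: coprod_ext (dl_smul y f g).
rewrite E1 E2 !coprodD !coprodZ !IH; last first.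
- by move: Hn; rewrite /= addSn ltnS.
- by move: Hn; rewrite /= addnS ltnS.
rewrite /M2.
set A1 := \sum_(0 <= i < (size a).+1) dl x f (take i a) * coprod g (drop i a) (y :: b).
set A2 := \sum_(0 <= i < (size a).+1) \sum_(0 <= j < (size b).+1)
  coprod (dl x f) (take i a) (y :: take j b) * coprod g (drop i a) (drop j b).
set B1 := \sum_(0 <= j < (size b).+1) dl y f (take j b) * coprod g (x :: a) (drop j b).
set B2 := \sum_(0 <= i < (size a).+1) \sum_(0 <= j < (size b).+1)
  coprod (dl y f) (x :: take i a) (take j b) * coprod g (drop i a) (drop j b).
have L1 : \sum_(0 <= i < (size a).+1)
     \sum_(0 <= j < (size (y :: b)).+1)
        coprod (dl x f) (take i a) (take j (y :: b)) *
        coprod g (drop i a) (drop j (y :: b)) = A1 + A2.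
  rewrite /A1 /A2 -big_split; apply: eq_bigr => i _.
  by rewrite big_nat_recl //= coprod_nil_r.
have L3 : \sum_(0 <= i < (size (x :: a)).+1)
      \sum_(0 <= j < (size b).+1)
         coprod (dl y f) (take i (x :: a)) (take j b) *
         coprod g (drop i (x :: a)) (drop j b) = B1 + B2.
  rewrite big_nat_recl //=; congr (_ + _).
  by apply: eq_bigr => j _; rewrite coprod_nil_l.
have R : \sum_(0 <= i < (size (x :: a)).+1)
     \sum_(0 <= j < (size (y :: b)).+1)
        coprod f (take i (x :: a)) (take j (y :: b)) *
        coprod g (drop i (x :: a)) (drop j (y :: b)) =
   f [::] * coprod g (x :: a) (y :: b) + B1 + (A1 + (A2 + B2)).
  rewrite big_nat_recl //= big_nat_recl //= coprod_nil_l.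
  congr (_ + _ + _).
    by apply: eq_bigr => j _; rewrite coprod_nil_l.
  rewrite /A1 /A2 /B2 -!big_split; apply: eq_bigr => i _ /=.
  rewrite big_nat_recl //= coprod_nil_r -big_split; congr (_ + _).
  by apply: eq_bigr => j _ /=; rewrite coprod_cons mulrDl.
rewrite L1 L3 R [coprod g (x :: a) (y :: b)]coprod_cons.
ring.
Qed.


Lemma tri (F : nat -> nat -> K) n :
  \sum_(0 <= k < n.+1) \sum_(0 <= i < k.+1) F i k =
  \sum_(0 <= i < n.+1) \sum_(0 <= j < (n - i).+1) F i (i + j)%N.
Proof.
elim: n => [|n IH]; first by rewrite !big_nat1 addn0.
rewrite big_nat_recr //= IH [RHS]big_nat_recr //= subnn big_nat1 addn0.
rewrite [\sum_(0 <= i < n.+2) _]big_nat_recr //= addrA; congr (_ + _).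
rewrite -big_split; apply: eq_big_nat => i /andP [_ Hi] /=.
by rewrite subSn // [RHS]big_nat_recr //= addnS subnKC.
Qed.


Lemma drop_take' (T : Type) (w : seq T) i k : (i <= k)%N ->
  drop i (take k w) = take (k - i) (drop i w).
Proof. by move=> Hik; rewrite take_drop subnK. Qed.

Lemma smul_ext (f1 f2 g1 g2 : S) : f1 =1 f2 -> g1 =1 g2 -> smul f1 g1 =1 smul f2 g2.
Proof. by move=> E1 E2 w; rewrite !smulE; apply: eq_bigr => i _; rewrite E1 E2. Qed.

Lemma smulA (f g h : S) : smul (smul f g) h =1 smul f (smul g h).
Proof.
move=> w; rewrite !smulE.
pose F i k := f (take i w) * g (take (k - i) (drop i w)) * h (drop k w).
transitivity (\sum_(0 <= k < (size w).+1) \sum_(0 <= i < k.+1) F i k).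
  apply: eq_big_nat => k /andP [_ Hk]; rewrite smulE size_takel // mulr_suml.
  by apply: eq_big_nat => i /andP [_ Hi]; rewrite /F take_takel // drop_take'.
rewrite tri; apply: eq_big_nat => i /andP [_ Hi].
rewrite smulE size_drop mulr_sumr; apply: eq_bigr => j _.
by rewrite /F addKn drop_drop addnC mulrA.
Qed.

Lemma smul_1l (g : S) : smul (@sone K d) g =1 g.
Proof.
move=> w; rewrite smulE big_nat_recl // /= big1_seq ?addr0 /sone /=; first by rewrite take0 drop0 mul1r.
move=> i; rewrite mem_index_iota => /andP [_ Hi].
by case: w Hi => [|z w] //=; rewrite mul0r.
Qed.

Lemma spowD (p : S) l r : smul (spow p l) (spow p r) =1 spow p (l + r).
Proof.
elim: l => [|l IH] w /=; first by rewrite smul_1l.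
rewrite smulA; apply: smul_ext => // z; exact: IH.
Qed.


Lemma lie_nil (p : S) : is_lie p -> p [::] = 0.
Proof.
move=> Hp; have := Hp [::] [::]; rewrite coprod_nil_l eqxx => E.
by apply: (addrI (p [::])); rewrite addr0 -E.
Qed.

Lemma sum_take_nil (T : eqType) (s : seq T) (X : K) (G : nat -> K) :
  \sum_(0 <= j < (size s).+1) (if take j s == [::] then X else 0) * G j = X * G 0%N.
Proof.
rewrite big_nat_recl // take0 eqxx big1_seq ?addr0 // => j.
rewrite mem_index_iota => /andP [_ Hj].
by rewrite -size_eq0 size_takel // mul0r.
Qed.

Lemma sum_drop_nil (T : eqType) (s : seq T) (X : K) (G : nat -> K) :
  \sum_(0 <= j < (size s).+1) G j * (if drop j s == [::] then X else 0) = G (size s) * X.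
Proof.
rewrite big_nat_recr //= drop_size eqxx big1_seq; first by rewrite add0r.
move=> j.
rewrite mem_index_iota => /andP [_ Hj].
case/andP: Hj => _ Hj; by rewrite -size_eq0 size_drop subn_eq0 leqNgt Hj mulr0.
Qed.

Lemma coprod_lie_l (p g : S) a b : is_lie p ->
  coprod (smul p g) a b =
  \sum_(0 <= i < (size a).+1) p (take i a) * coprod g (drop i a) b +
  \sum_(0 <= j < (size b).+1) p (take j b) * coprod g a (drop j b).
Proof.
move=> Hp; rewrite coprod_smul /M2.
transitivity (\sum_(0 <= i < (size a).+1) \sum_(0 <= j < (size b).+1)
  ((if take j b == [::] then p (take i a) else 0) * coprod g (drop i a) (drop j b) +
   (if take i a == [::] then p (take j b) else 0) * coprod g (drop i a) (drop j b))).
  by apply: eq_bigr => i _; apply: eq_bigr => j _; rewrite Hp mulrDl.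
under eq_bigr => i _ do rewrite big_split /=.
rewrite big_split /=; congr (_ + _).
  apply: eq_bigr => i _.
  by rewrite (@sum_take_nil _ b (p (take i a)) (fun j => coprod g (drop i a) (drop j b))) drop0.
rewrite exchange_big /=; apply: eq_bigr => j _.
by rewrite (@sum_take_nil _ a (p (take j b)) (fun i => coprod g (drop i a) (drop j b))) drop0.
Qed.

Lemma coprod_lie_r (g p : S) a b : is_lie p ->
  coprod (smul g p) a b =
  \sum_(0 <= i < (size a).+1) coprod g (take i a) b * p (drop i a) +
  \sum_(0 <= j < (size b).+1) coprod g a (take j b) * p (drop j b).
Proof.
move=> Hp; rewrite coprod_smul /M2.
transitivity (\sum_(0 <= i < (size a).+1) \sum_(0 <= j < (size b).+1)
  (coprod g (take i a) (take j b) * (if drop j b == [::] then p (drop i a) else 0) +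
   coprod g (take i a) (take j b) * (if drop i a == [::] then p (drop j b) else 0))).
  by apply: eq_bigr => i _; apply: eq_bigr => j _; rewrite Hp mulrDr.
under eq_bigr => i _ do rewrite big_split /=.
rewrite big_split /=; congr (_ + _).
  apply: eq_bigr => i _.
  by rewrite (@sum_drop_nil _ b (p (drop i a)) (fun j => coprod g (take i a) (take j b))) take_size.
rewrite exchange_big /=; apply: eq_bigr => j _.
by rewrite (@sum_drop_nil _ a (p (drop j b)) (fun i => coprod g (take i a) (take j b))) take_size.
Qed.


Lemma coprod_sone a b : coprod (@sone K d) a b = @sone K d a * @sone K d b.
Proof.
case: a => [|x a]; first by rewrite coprod_nil_l /sone eqxx mul1r.
case: b => [|y b]; first by rewrite coprod_nil_r /sone eqxx mulr1.
rewrite coprod_cons !(@coprod_ext _ (fun _ => 0)) ?coprod0 ?addr0 /sone /= ?mul0r //.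
Qed.

Lemma pascal (A B : nat -> K) m :
  \sum_(0 <= l < m.+1) 'C(m, l)%:R * A l.+1 * B (m - l)%N +
  \sum_(0 <= l < m.+1) 'C(m, l)%:R * A l * B (m - l).+1 =
  \sum_(0 <= l < m.+2) 'C(m.+1, l)%:R * A l * B (m.+1 - l)%N.
Proof.
rewrite [RHS]big_nat_recl // [in X in _ = _ + X](eq_bigr (fun l =>
  'C(m, l.+1)%:R * A l.+1 * B (m - l)%N + 'C(m, l)%:R * A l.+1 * B (m - l)%N)); last first.
  by move=> l _; rewrite binS natrD subSS !mulrDl.
rewrite big_split /=.
suff -> : \sum_(0 <= l < m.+1) 'C(m, l)%:R * A l * B (m - l).+1 =
  'C(m.+1, 0)%:R * A 0%N * B (m.+1 - 0)%N +
  \sum_(0 <= i < m.+1) 'C(m, i.+1)%:R * A i.+1 * B (m - i)%N by ring.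
rewrite big_nat_recl // [in RHS]big_nat_recr //= (bin_small (ltnSn m)) !mul0r addr0.
rewrite subn0 !bin0; congr (_ + _).
apply: eq_big_nat => l /andP [_ Hl]; by rewrite subnSK.
Qed.

Lemma coprod_spow (p : S) m a b : is_lie p ->
  coprod (spow p m) a b = \sum_(0 <= l < m.+1) 'C(m, l)%:R * spow p l a * spow p (m - l) b.
Proof.
move=> Hp; elim: m a b => [|m IH] a b.
  by rewrite big_nat1 /= coprod_sone bin0 mul1r.
rewrite [spow p m.+1]/= coprod_lie_l // -(pascal (fun l => spow p l a) (fun r => spow p r b)).
congr (_ + _).
  under eq_bigr => i _ do rewrite IH mulr_sumr.
  rewrite exchange_big; apply: eq_bigr => l _ /=; rewrite smulE mulr_sumr mulr_suml.
  by apply: eq_bigr => i _; ring.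
under eq_bigr => j _ do rewrite IH mulr_sumr.
rewrite exchange_big; apply: eq_big_nat => l /andP [_ Hl] /=.
rewrite smulE mulr_sumr; apply: eq_bigr => j _; ring.
Qed.


Lemma sum_bin m : \sum_(0 <= l < m.+1) ('C(m, l)%:R : K) = (2 ^ m)%:R.
Proof.
elim: m => [|m IH]; first by rewrite big_nat1.
transitivity (\sum_(0 <= l < m.+2) 'C(m.+1, l)%:R * (fun _ => (1 : K)) l * (fun _ => (1 : K)) (m.+1 - l)%N).
  by apply: eq_bigr => l _; rewrite !mulr1.
rewrite -(pascal (fun _ => (1 : K)) (fun _ => (1 : K))).
have E : forall F : nat -> K, \sum_(0 <= l < m.+1) F l * 1 * 1 = \sum_(0 <= l < m.+1) F l.
  by move=> F; apply: eq_bigr => l _; rewrite !mulr1.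
by rewrite !E IH expnS natrM mulr_natl mulr2n.
Qed.

Definition psi (f : S) : S :=
  fun w => \sum_(0 <= k < (size w).+1) coprod f (take k w) (drop k w).

Lemma psi_ext (f g : S) : f =1 g -> psi f =1 psi g.
Proof. by move=> E w; apply: eq_bigr => k _; apply: coprod_ext. Qed.

Lemma psi_ext_size (f g : S) w :
  (forall z, size z = size w -> f z = g z) -> psi f w = psi g w.
Proof.
move=> E; apply: eq_bigr => k _; apply: coprod_ext_size => z Hz; apply: E.
by rewrite Hz -size_cat cat_take_drop.
Qed.

Lemma psiD (f g : S) w : psi (fun z => f z + g z) w = psi f w + psi g w.
Proof. by rewrite /psi -big_split; apply: eq_bigr => k _; rewrite coprodD. Qed.

Lemma psiB (f g : S) w : psi (fun z => f z - g z) w = psi f w - psi g w.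
Proof. by rewrite /psi -sumrB; apply: eq_bigr => k _; rewrite coprodB. Qed.

Lemma psiZ c (f : S) w : psi (fun z => c * f z) w = c * psi f w.
Proof. by rewrite /psi mulr_sumr; apply: eq_bigr => k _; rewrite coprodZ. Qed.

Lemma psi_sum (I : Type) (r : seq I) (P : pred I) (F : I -> S) w :
  psi (fun z => \sum_(i <- r | P i) F i z) w = \sum_(i <- r | P i) psi (F i) w.
Proof. by rewrite /psi exchange_big; apply: eq_bigr => k _; rewrite coprod_sum. Qed.

Lemma psi_spow (p : S) m w : is_lie p -> psi (spow p m) w = (2 ^ m)%:R * spow p m w.
Proof.
move=> Hp; rewrite /psi.
under eq_bigr => k _ do rewrite coprod_spow //.
rewrite exchange_big -sum_bin mulr_suml; apply: eq_big_nat => l /andP [_ Hl] /=.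
have Hl2 : (l <= m)%N by rewrite -ltnS.
have -> : spow p m w = spow p (l + (m - l)) w by rewrite subnKC.
rewrite -(spowD p l (m - l)) smulE mulr_sumr; apply: eq_bigr => k _.
by rewrite mulrA.
Qed.


Lemma psi_comm (p g : S) w : is_lie p ->
  psi (fun z => smul p g z - smul g p z) w = smul p (psi g) w - smul (psi g) p w.
Proof.
move=> Hp; rewrite psiB.
set n := size w.
pose F i l := p (take (l - i) (drop i w)) * coprod g (take i w) (drop l w).
have T2 : \sum_(0 <= k < n.+1) \sum_(0 <= j < (size (drop k w)).+1)
     p (take j (drop k w)) * coprod g (take k w) (drop j (drop k w)) =
   \sum_(0 <= i < n.+1) \sum_(0 <= j < (n - i).+1) F i (i + j)%N.
  apply: eq_big_nat => k _; rewrite size_drop; apply: eq_bigr => j _.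
  by rewrite /F addKn drop_drop addnC.
have T3 : \sum_(0 <= k < n.+1) \sum_(0 <= i < (size (take k w)).+1)
     coprod g (take i (take k w)) (drop k w) * p (drop i (take k w)) =
   \sum_(0 <= k < n.+1) \sum_(0 <= i < k.+1) F i k.
  apply: eq_big_nat => k /andP [_ Hk]; rewrite ltnS in Hk; rewrite size_takel //.
  apply: eq_big_nat => i /andP [_ Hi]; rewrite ltnS in Hi; rewrite /F take_takel // drop_take' //.
  by rewrite mulrC.
have A : psi (smul p g) w = smul p (psi g) w +
   \sum_(0 <= k < n.+1) \sum_(0 <= j < (size (drop k w)).+1)
     p (take j (drop k w)) * coprod g (take k w) (drop j (drop k w)).
  rewrite /psi -/n; under eq_bigr => k _ do rewrite coprod_lie_l //.
  rewrite big_split /=; congr (_ + _).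
  pose G i k := p (take i w) * coprod g (take (k - i) (drop i w)) (drop k w).
  transitivity (\sum_(0 <= k < n.+1) \sum_(0 <= i < k.+1) G i k).
    apply: eq_big_nat => k /andP [_ Hk]; rewrite ltnS in Hk; rewrite size_takel //.
    apply: eq_big_nat => i /andP [_ Hi]; rewrite ltnS in Hi.
    by rewrite /G take_takel // drop_take'.
  rewrite tri smulE; apply: eq_big_nat => i /andP [_ Hi].
  rewrite /psi size_drop mulr_sumr; apply: eq_bigr => j _.
  by rewrite /G addKn drop_drop addnC.
have B : psi (smul g p) w =
   \sum_(0 <= k < n.+1) \sum_(0 <= i < (size (take k w)).+1)
     coprod g (take i (take k w)) (drop k w) * p (drop i (take k w)) +
   smul (psi g) p w.
  rewrite /psi -/n; under eq_bigr => k _ do rewrite coprod_lie_r //.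
  rewrite big_split /=; congr (_ + _).
  pose G i l := coprod g (take i w) (take (l - i) (drop i w)) * p (drop l w).
  transitivity (\sum_(0 <= i < n.+1) \sum_(0 <= j < (n - i).+1) G i (i + j)%N).
    apply: eq_big_nat => k _; rewrite size_drop; apply: eq_bigr => j _.
    by rewrite /G addKn drop_drop addnC.
  rewrite -tri smulE; apply: eq_big_nat => l /andP [_ Hl]; rewrite ltnS in Hl.
  rewrite /psi size_takel // mulr_suml; apply: eq_big_nat => i /andP [_ Hi]; rewrite ltnS in Hi.
  by rewrite /G take_takel // drop_take'.
rewrite A B T2 T3 tri.
ring.
Qed.


Definition delta (x : 'I_d) : S := fun w => if w == [:: x] then 1 else 0.

Lemma delta_nil x : delta x [::] = 0.
Proof. by []. Qed.

Lemma dl_delta y x : dl y (delta x) =1 fun z => (if y == x then 1 else 0) * @sone K d z.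
Proof.
move=> z; rewrite /dl /delta /sone eqseq_cons.
by case: (y == x); case: (z == [::]); rewrite ?mul1r ?mul0r.
Qed.

Lemma delta_lie x : is_lie (delta x).
Proof.
move=> a b; case: a => [|x1 a].
  by rewrite coprod_nil_l delta_nil eqxx; case: (b == [::]); rewrite ?add0r.
case: b => [|y1 b].
  by rewrite coprod_nil_r delta_nil eqxx /= addr0.
rewrite coprod_cons (coprod_ext _ _ _ _ (dl_delta x1 x)) (coprod_ext _ _ _ _ (dl_delta y1 x)).
by rewrite !coprodZ !coprod_sone /sone /= !mul0r !mulr0 !addr0.
Qed.

Lemma smul_delta_l x (g : S) y t : smul (delta x) g (y :: t) = if y == x then g t else 0.
Proof.
rewrite dl_smul delta_nil mul0r addr0 smulE.
transitivity (\sum_(0 <= k < (size t).+1)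
   (if take k t == [::] then (if y == x then 1 else 0) else 0) * g (drop k t)).
  apply: eq_bigr => k _; rewrite (dl_delta y x) /sone.
  by case: (y == x); case: (take k t == [::]); rewrite ?mul1r ?mul0r.
by rewrite (@sum_take_nil _ t (if y == x then 1 else 0) (fun k => g (drop k t))) drop0; case: (y == x); rewrite ?mul1r ?mul0r.
Qed.

Lemma smul_delta_r x (g : S) s z : smul g (delta x) (rcons s z) = if z == x then g s else 0.
Proof.
rewrite smulE size_rcons big_nat_recr //= big_nat_recr //=.
rewrite -cats1 take_size_cat // drop_size_cat //.
rewrite (drop_oversize (n := (size s).+1)) ?size_cat ?addn1 // delta_nil mulr0 addr0.
rewrite big1_seq ?add0r; first by rewrite /delta eqseq_cons andbT; case: (z == x); rewrite ?mulr1 ?mulr0.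
move=> k /andP [_]; rewrite mem_index_iota => /andP [_ Hk].
rewrite drop_cat Hk /delta; case: eqP => [E|]; last by rewrite mulr0.
by move: (congr1 size E); rewrite size_cat size_drop /= addn1 => -[] /eqP; rewrite subn_eq0 leqNgt Hk.
Qed.

Lemma smul_delta_nil x (g : S) : smul (delta x) g [::] = 0 /\ smul g (delta x) [::] = 0.
Proof. by rewrite !smulE !big_nat1 /= delta_nil mulr0 mul0r. Qed.


Definition cyc (f : S) (w : seq 'I_d) : K :=
  if w is [::] then f [::] else \sum_(0 <= i < size w) f (rot i w).

Definition cs (H : S) (w : seq 'I_d) : K := \sum_(0 <= r < size w) H (rot r w).

Lemma cs_rot1 H w : cs H (rot 1 w) = cs H w.
Proof.
case: w => [|y t] //; rewrite /cs size_rot.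
set w := y :: t; set n := size w.
have E : \sum_(0 <= r < n) H (rot r (rot 1 w)) = \sum_(0 <= r < n) H (rot r.+1 w).
  apply: eq_big_nat => r /andP [_ Hr]; by rewrite rot_rot -rotS.
rewrite E; apply: (@addrI _ (H (rot 0 w))).
rewrite -(big_nat_recl n 0 (fun r => H (rot r w))) // big_nat_recr //= rot0 rot_size addrC.
by [].
Qed.

Lemma cs_rot H w c : cs H (rot c w) = cs H w.
Proof.
elim: c => [|c IH]; first by rewrite rot0.
case: (ltnP c (size w)) => Hc.
  by rewrite rotS // cs_rot1.
by rewrite rot_oversize // (leq_trans Hc).
Qed.

Lemma cyc_comm (a b : S) w : cyc (smul a b) w = cyc (smul b a) w.
Proof.
case: w => [|y t]; first by rewrite /cyc !smulE !big_nat1 /= mulrC.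
rewrite /cyc; set w := y :: t; set n := size w.
pose H i (z : seq 'I_d) := a (take i z) * b (drop i z).
pose G i (z : seq 'I_d) := b (take i z) * a (drop i z).
have E1 : \sum_(0 <= i < n) smul a b (rot i w) = \sum_(0 <= i < n.+1) cs (H i) w.
  under eq_bigr => r _ do rewrite smulE size_rot.
  by rewrite exchange_big.
have E2 : \sum_(0 <= i < n) smul b a (rot i w) = \sum_(0 <= i < n.+1) cs (G i) w.
  under eq_bigr => r _ do rewrite smulE size_rot.
  by rewrite exchange_big.
rewrite E1 E2 big_nat_rev /=; apply: eq_big_nat => i /andP [_ Hi].
rewrite add0n subSS -(cs_rot (H (n - i)%N) w i) /cs size_rot; apply: eq_bigr => r _.
rewrite rot_rot /G /H; set z := rot r w.
have Hz : size z = n by rewrite size_rot.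
rewrite /rot take_size_cat ?size_drop ?Hz // drop_size_cat ?size_drop ?Hz //.
by rewrite mulrC.
Qed.

Lemma cyc_ext_size (f g : S) w :
  (forall z, size z = size w -> f z = g z) -> cyc f w = cyc g w.
Proof.
case: w => [|y t] E; first by rewrite /cyc E.
by rewrite /cyc; apply: eq_bigr => i _; rewrite E // size_rot.
Qed.

Lemma cyc_sum (I : Type) (r : seq I) (P : pred I) (F : I -> S) w :
  cyc (fun z => \sum_(i <- r | P i) F i z) w = \sum_(i <- r | P i) cyc (F i) w.
Proof. by case: w => [|y t] //=; rewrite exchange_big. Qed.

Lemma cycB (f g : S) w : cyc (fun z => f z - g z) w = cyc f w - cyc g w.
Proof. by case: w => [|y t] //=; rewrite sumrB. Qed.

Lemma cycZ c (f : S) w : cyc (fun z => c * f z) w = c * cyc f w.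
Proof. by case: w => [|y t] //=; rewrite mulr_sumr. Qed.

Lemma cyc_commutator (a b : S) w : cyc (fun z => smul a b z - smul b a z) w = 0.
Proof. by rewrite cycB cyc_comm subrr. Qed.

Lemma closure_cyc (f : S) : in_comm_closure f -> forall w, cyc f w = 0.
Proof.
move=> Hf w; have [n [a [b Hab]]] := Hf (size w).+1.
rewrite (@cyc_ext_size _ (fun z => \sum_(i < n) (smul (a i) (b i) z - smul (b i) (a i) z)) w).
  by rewrite cyc_sum big1 // => i _; rewrite cyc_commutator.
by move=> z Hz; rewrite Hab // Hz.
Qed.


Lemma natf_neq0 (HK : [pchar K] =i pred0) n : n != 0%N -> n%:R != 0 :> K.
Proof. by move/pcharf0P: HK => ->. Qed.

Definition Gt (f : S) (w : seq 'I_d) : K :=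
  (size w)%:R^-1 * \sum_(0 <= i < size w) (i.+1)%:R * f (rot i.+1 w).

Lemma Gt_tel (HK : [pchar K] =i pred0) (f : S) w : w != [::] -> cyc f w = 0 ->
  Gt f w - Gt f (rotr 1 w) = f w.
Proof.
case: w => [|y t] // _ Hc; set w := y :: t; set n := size w.
have Hn : n%:R != 0 :> K by apply: natf_neq0.
rewrite /Gt size_rotr -/n.
have E1 : \sum_(0 <= i < n) (i.+1)%:R * f (rot i.+1 (rotr 1 w)) =
          \sum_(0 <= i < n) (i.+1)%:R * f (rot i w).
  apply: eq_big_nat => i /andP [_ Hi].
  by rewrite rotS ?size_rotr // rot_rot rotrK.
have E2 : \sum_(0 <= i < n) (i.+1)%:R * f (rot i.+1 w) =
          \sum_(0 <= i < n) i%:R * f (rot i w) + n%:R * f w.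
  have L : \sum_(0 <= i < n.+1) i%:R * f (rot i w) =
     0%:R * f (rot 0 w) + \sum_(0 <= i < n) (i.+1)%:R * f (rot i.+1 w).
    exact: big_nat_recl.
  have Hr : rot n w = w by rewrite /n rot_size.
  rewrite mulr0n mul0r add0r in L.
  by rewrite -L big_nat_recr // Hr.
have E3 : \sum_(0 <= i < n) (i.+1)%:R * f (rot i w) =
          \sum_(0 <= i < n) i%:R * f (rot i w) + \sum_(0 <= i < n) f (rot i w).
  by rewrite -big_split; apply: eq_bigr => i _; rewrite mulrSr mulrDl mul1r.
have Hc' : \sum_(0 <= i < n) f (rot i w) = 0 by [].
by rewrite E1 E2 E3 Hc' addr0 -mulrBr addrC addKr mulrA mulVf // mul1r.
Qed.

Lemma sum_if_eq (F : 'I_d -> K) c : \sum_(x < d) (if c == x then F x else 0) = F c.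
Proof.
rewrite -big_mkcond /= (big_pred1 c) //= => x; by rewrite /= eq_sym.
Qed.

Definition Bt (f : S) (x : 'I_d) : S := fun t => Gt f (x :: t).

Lemma cyc_decomp (HK : [pchar K] =i pred0) (f : S) : (forall w, cyc f w = 0) ->
  forall w, f w = \sum_(x < d) (smul (delta x) (Bt f x) w - smul (Bt f x) (delta x) w).
Proof.
move=> Hc w; case/lastP: w => [|s z].
  rewrite big1; first by have := Hc [::].
  by move=> x _; have [-> ->] := smul_delta_nil x (Bt f x); rewrite subrr.
rewrite sumrB.
have R : \sum_(x < d) smul (Bt f x) (delta x) (rcons s z) = Gt f (rotr 1 (rcons s z)).
  under eq_bigr => x _ do rewrite smul_delta_r.
  by rewrite (sum_if_eq (fun x => Bt f x s)) rotr1_rcons.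
have [y [t E]] : exists y t, rcons s z = y :: t by case: (s) => [|y s']; do 2 eexists.
have L : \sum_(x < d) smul (delta x) (Bt f x) (rcons s z) = Gt f (rcons s z).
  rewrite E; under eq_bigr => x _ do rewrite smul_delta_l.
  by rewrite (sum_if_eq (fun x => Bt f x t)).
by rewrite R L Gt_tel // E.
Qed.

Lemma cyc_closure (HK : [pchar K] =i pred0) (f : S) :
  (forall w, cyc f w = 0) -> in_comm_closure f.
Proof.
move=> Hc N; exists d, delta, (Bt f) => w _; exact: cyc_decomp.
Qed.

Lemma psi_cyc (HK : [pchar K] =i pred0) (f : S) :
  (forall w, cyc f w = 0) -> forall w, cyc (psi f) w = 0.
Proof.
move=> Hc w.
have E : forall z, psi f z = \sum_(x < d) (smul (delta x) (psi (Bt f x)) z -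
                                           smul (psi (Bt f x)) (delta x) z).
  move=> z; rewrite (psi_ext _ _ (cyc_decomp HK _ Hc)) psi_sum; apply: eq_bigr => x _.
  apply: psi_comm; exact: delta_lie.
rewrite (cyc_ext_size _ _ w (fun z _ => E z)) cyc_sum big1 // => x _.
exact: cyc_commutator.
Qed.


Lemma spow_small (p : S) k w : p [::] = 0 -> (size w < k)%N -> spow p k w = 0.
Proof.
move=> Hp; elim: k w => [|k IH] w // Hw /=.
rewrite smulE big1_seq // => i /andP [_]; rewrite mem_index_iota => /andP [_ Hi].
case: i Hi => [|i] Hi; first by rewrite take0 Hp mul0r.
rewrite IH ?mulr0 // size_drop; lia.
Qed.

Lemma sum_widen (F : nat -> K) n N : (n <= N)%N -> (forall k, (n <= k)%N -> F k = 0) ->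
  \sum_(k < n) F k = \sum_(k < N) F k.
Proof.
move=> H HF; rewrite -!(big_mkord xpredT) (big_cat_nat (leq0n n) H) /=.
rewrite [X in _ = _ + X]big1_seq ?addr0 // => k /andP [_]; rewrite mem_index_iota.
by move=> /andP [Hk _]; exact: HF.
Qed.

Lemma cyc0 w : cyc (fun _ => 0) w = 0.
Proof. by case: w => [|y t] //=; rewrite big1. Qed.

Lemma natr_inj (HK : [pchar K] =i pred0) (a b : nat) : a%:R = b%:R :> K -> a = b.
Proof.
move=> E; case: (ltngtP a b) => // H.
  have H1 : (b - a)%:R != 0 :> K by apply: natf_neq0; rewrite // subn_eq0 -ltnNge.
  by move: H1; rewrite natrB ?(ltnW H) // E subrr eqxx.
have H1 : (a - b)%:R != 0 :> K by apply: natf_neq0; rewrite // subn_eq0 -ltnNge.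
by move: H1; rewrite natrB ?(ltnW H) // E subrr eqxx.
Qed.

Lemma vdm (HK : [pchar K] =i pred0) N (alpha : nat -> K) :
  (forall r, (r < N)%N -> \sum_(k < N) ((2 ^ k) ^ r)%:R * alpha k = 0) ->
  forall k, (k < N)%N -> alpha k = 0.
Proof.
move=> Hr k Hk.
pose p := \poly_(i < N) alpha i.
pose rs := [seq ((2 ^ r)%:R : K) | r <- iota 0 N].
have Hroot : all (root p) rs.
  apply/allP => x /mapP [r Hr' ->]; rewrite mem_iota add0n in Hr'.
  case/andP: Hr' => _ Hr'.
  rewrite /root horner_poly; apply/eqP; rewrite -[RHS](Hr r) //; apply: eq_bigr => i _.
  by rewrite -natrX -!expnM mulnC mulrC.
have Hu : uniq rs.
  rewrite map_inj_uniq ?iota_uniq // => r1 r2 /(natr_inj HK); exact: expnI.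
have p0 : p = 0.
  apply/eqP; apply: contraT => Hp.
  have := max_poly_roots Hp Hroot Hu; rewrite size_map size_iota.
  by move=> H; have := leq_trans H (size_poly N alpha); rewrite ltnn.
by have := congr1 (fun q : {poly K} => q`_k) p0; rewrite coef_poly Hk coef0.
Qed.


Lemma key (HK : [pchar K] =i pred0) n (u : S) (v : 'I_n.+1 -> S)
  (Hu : is_lie u) (Hv : forall j, is_lie (v j)) (c : 'I_n.+1 -> nat -> K) :
  (forall w, cyc (fun z => sexp u z - \sum_(j < n.+1) spowser (c j) (v j) z) w = 0) ->
  forall m w, cyc (fun z => (m`!%:R)^-1 * spow u m z -
                            \sum_(j < n.+1) c j m * spow (v j) m z) w = 0.
Proof.
move=> Hh m w.
set N := (maxn (size w) m).+1.
pose P k z := (k`!%:R)^-1 * spow u k z - \sum_(j < n.+1) c j k * spow (v j) k z.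
pose h z := sexp u z - \sum_(j < n.+1) spowser (c j) (v j) z.
have hP : forall z, (size z < N)%N -> h z = \sum_(k < N) P k z.
  move=> z Hz; rewrite /h /sexp /spowser.
  rewrite (@sum_widen (fun k => (k`!%:R)^-1 * spow u k z) _ N) //; last first.
    by move=> k Hk; rewrite spow_small ?mulr0 //; exact: lie_nil.
  have Ej : forall j : 'I_n.+1, \sum_(k < (size z).+1) c j k * spow (v j) k z =
      \sum_(k < N) c j k * spow (v j) k z.
    move=> j; apply: (@sum_widen (fun k => c j k * spow (v j) k z)) => // k Hk.
    by rewrite spow_small ?mulr0 //; exact: lie_nil.
  rewrite (eq_bigr _ (fun j _ => Ej j)).
  by rewrite exchange_big -sumrB.
have psiP : forall k z, psi (P k) z = (2 ^ k)%:R * P k z.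
  move=> k z; rewrite /P psiB psiZ psi_spow // psi_sum.
  under eq_bigr => j _ do rewrite psiZ psi_spow //.
  rewrite mulrBr mulr_sumr mulrCA; congr (_ - _).
  by apply: eq_bigr => j _; rewrite mulrCA.
pose HN z := \sum_(k < N) P k z.
have iterH : forall r z, iter r psi HN z = \sum_(k < N) ((2 ^ k) ^ r)%:R * P k z.
  elim=> [|r IH] z /=; first by apply: eq_bigr => k _; rewrite expn0 mul1r.
  rewrite (psi_ext _ _ IH) psi_sum; apply: eq_bigr => k _.
  by rewrite psiZ psiP mulrA -natrM expnSr mulnC.
pose T z := if (size z < N)%N then h z else 0.
have cycT : forall z, cyc T z = 0.
  move=> z; case: (ltnP (size z) N) => Hz.
    by rewrite (cyc_ext_size T h z) ?Hh // => y Hy; rewrite /T Hy Hz.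
  rewrite (cyc_ext_size T (fun _ => 0) z) ?cyc0 // => y Hy.
  by rewrite /T Hy ltnNge Hz.
have cycIT : forall r z, cyc (iter r psi T) z = 0.
  elim=> [|r IH] z /=; [exact: cycT | exact: (psi_cyc HK _ IH z)].
have ITeq : forall r z, (size z < N)%N -> iter r psi T z = iter r psi HN z.
  elim=> [|r IH] z Hz /=; first by rewrite /T Hz hP.
  by apply: psi_ext_size => y Hy; apply: IH; rewrite Hy.
have Hr : forall r, (r < N)%N -> \sum_(k < N) ((2 ^ k) ^ r)%:R * cyc (P k) w = 0.
  move=> r _; rewrite -[RHS](cycIT r w).
  rewrite (cyc_ext_size (iter r psi T) (fun z => \sum_(k < N) ((2 ^ k) ^ r)%:R * P k z) w).
    by rewrite cyc_sum; apply: eq_bigr => k _; rewrite cycZ.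
  by move=> y Hy; rewrite ITeq ?iterH // Hy /N ltnS leq_maxl.
have V := @vdm HK N (fun k => cyc (P k) w) Hr m. apply: V. by rewrite /N ltnS leq_maxr.
Qed.

End Work.


Theorem theorem3p3 (K : fieldType) (HK : [pchar K] =i pred0) (d n : nat)
  (u : series K d) (v : 'I_n.+1 -> series K d)
  (Hu : is_lie u) (Hv : forall j, is_lie (v j))
  (H : exists c : 'I_n.+1 -> nat -> K,
         in_comm_closure (fun w => sexp u w - \sum_(j < n.+1) spowser (c j) (v j) w)) :
  forall m : nat, exists a : 'I_n.+1 -> K,
    in_comm_closure (fun w => spow u m w - \sum_(j < n.+1) a j * spow (v j) m w).
Proof.
move=> m; case: H => c Hc.
have Hh := @closure_cyc K d _ Hc.
exists (fun j => m`!%:R * c j m).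
apply: (@cyc_closure K d HK) => w.
rewrite (@cyc_ext_size K d _ (fun z => m`!%:R * ((m`!%:R)^-1 * spow u m z -
           \sum_(j < n.+1) c j m * spow (v j) m z)) w).
  by rewrite cycZ (@key K d HK n u v Hu Hv c Hh m w) mulr0.
move=> z _; rewrite mulrBr mulrA mulfV ?mul1r; last by apply: (@natf_neq0 K HK); rewrite -lt0n fact_gt0.
by rewrite mulr_sumr; congr (_ - _); apply: eq_bigr => j _; rewrite mulrA.
Qed.
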